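(* Let $k$ be a perfect field of characteristic $p>0$, $P$ a finite poset, $R=\mathcal{R}_k[J(P)]$ the Hibi ring and $\mathfrak{m}=R_+$. Let $\overline{P}=P\cup\{-\infty,\infty\}$ and let $\Sigma$ be the set of functions $\psi:\overline{P}\to\mathbb{R}$ such that $\psi(\infty)=0$ and $0\le\psi(x)-\psi(y)\le1$ whenever $x\lessdot y$ in $\overline{P}$. Then \[ \operatorname{fpt}(\mathfrak{m})=\max\{\psi(-\infty)\mid\psi\in\Sigma\}. \]
   Context: $J(P)$ is the set of poset ideals of $P=\{p_1,\dots,p_N\}$ (down-closed subsets, including $\emptyset$ and $P$). The Hibi ring is $\mathcal{R}_k[J(P)]=k[\,T\prod_{p_i\in I}X_i\mid I\in J(P)\,]\subseteq k[T,X_1,\dots,X_N]$, each generator in degree $1$; $\mathfrak{m}=R_+$ is generated by these generators. In $\overline{P}$, $-\infty<x<\infty$ for all $x\in P$; $x\lessdot y$ means $x<y$ with no $z$ satisfying $x<z<y$. For a real $t\ge0$, the pair $(R,\mathfrak{m}^t)$ is $F$-pure if for all large $q=p^e$ there is $d\in\mathfrak{m}^{\lceil t(q-1)\rceil}$ such that the $R$-linear map $R\to R^{1/q}$, $1\mapsto d^{1/q}$, splits; $\operatorname{fpt}(\mathfrak{m})=\sup\{t\ge0\mid(R,\mathfrak{m}^t)\text{ is }F\text{-pure}\}$. *)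

(* Defs.v *)
From HB Require Import structures.
From mathcomp Require Import all_boot all_order all_algebra.
From mathcomp Require Import reals.
From mathcomp Require Import mpoly.

Set Implicit Arguments.
Unset Strict Implicit.
Unset Printing Implicit Defensive.

Import Order.TTheory GRing.Theory Num.Theory.
Local Open Scope ring_scope.

Definition perfect_field (k : fieldType) (p : nat) : Prop :=
  forall x : k, exists y : k, y ^+ p = x.

Section Hibi.
Variables (k : fieldType) (disp : Order.disp_t) (P : finPOrderType disp).

(* The ambient polynomial ring k[T, X_x (x in P)]: variable 0 is T,
   variable (lift 0 (enum_rank x)) is X_x. *)
Definition nvars := #|P|.+1.
Definition polyR := {mpoly k[nvars]}.
Definition varT : 'I_nvars := ord0.
Definition varX (x : P) : 'I_nvars := lift ord0 (enum_rank x).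

Definition poset_ideal (I : {set P}) : Prop :=
  forall x y : P, (y <= x)%O -> x \in I -> y \in I.

Definition hibi_gen (I : {set P}) : polyR :=
  'X_varT * \prod_(x in I) 'X_(varX x).

Inductive inHibi : polyR -> Prop :=
| Hibi_gen I : poset_ideal I -> inHibi (hibi_gen I)
| Hibi_const (c : k) : inHibi c%:MP
| Hibi_add f g : inHibi f -> inHibi g -> inHibi (f + g)
| Hibi_mul f g : inHibi f -> inHibi g -> inHibi (f * g).

Inductive inM : polyR -> Prop :=
| M_gen r I : inHibi r -> poset_ideal I -> inM (r * hibi_gen I)
| M_add f g : inM f -> inM g -> inM (f + g).

Inductive inMpow : nat -> polyR -> Prop :=
| Mpow0 f : inHibi f -> inMpow 0 f
| MpowS n a b : inMpow n a -> inM b -> inMpow n.+1 (a * b)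
| Mpow_add n f g : inMpow n f -> inMpow n g -> inMpow n (f + g).

(* The R-linear map R -> R^{1/q}, 1 |-> d^{1/q} splits.  Identifying R^{1/q}
   with R via s^{1/q} <-> s (so that r . s^{1/q} = (r^q s)^{1/q}), a splitting
   is an R-linear phi : R^{1/q} -> R with phi(d^{1/q}) = 1. *)
Definition frob_splits (q : nat) (d : polyR) : Prop :=
  exists phi : polyR -> polyR,
    [/\ forall s, inHibi s -> inHibi (phi s),
        forall s1 s2, inHibi s1 -> inHibi s2 -> phi (s1 + s2) = phi s1 + phi s2,
        forall r s, inHibi r -> inHibi s -> phi (r ^+ q * s) = r * phi s
      & phi d = 1].

Definition Fpure_pair (R : realType) (p : nat) (t : R) : Prop :=
  exists e0 : nat, forall e : nat, (e0 <= e)%N ->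
    exists d : polyR,
      inMpow `|Num.ceil (t * ((p ^ e).-1)%:R)|%N d /\ frob_splits (p ^ e) d.

Definition is_fpt (R : realType) (p : nat) (c : R) : Prop :=
  (forall t : R, 0 <= t -> Fpure_pair p t -> t <= c) /\
  (forall b : R, (forall t : R, 0 <= t -> Fpure_pair p t -> t <= b) -> c <= b).

End Hibi.

Inductive pbar (T : Type) : Type :=
| PBot : pbar T
| PElt : T -> pbar T
| PTop : pbar T.
Arguments PBot {T}.
Arguments PTop {T}.

Section Pbar.
Variables (disp : Order.disp_t) (P : finPOrderType disp).

Definition pbar_lt (a b : pbar P) : Prop :=
  match a, b with
  | PBot, PBot => False
  | PBot, _ => True
  | PElt x, PElt y => (x < y)%O
  | PElt _, PTop => True
  | _, _ => False
  end.

Definition pbar_covers (a b : pbar P) : Prop :=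
  pbar_lt a b /\ forall c, ~ (pbar_lt a c /\ pbar_lt c b).

Definition in_Sigma (R : realType) (psi : pbar P -> R) : Prop :=
  psi PTop = 0 /\
  forall a b, pbar_covers a b -> 0 <= psi a - psi b /\ psi a - psi b <= 1.

End Pbar.

(* Main.v *)
Require Import Defs.
From HB Require Import structures.
From mathcomp Require Import all_boot all_order all_algebra.
From mathcomp Require Import reals.
From mathcomp Require Import mpoly.
From mathcomp Require Import zify ring lra.
From Stdlib Require Import Classical ClassicalEpsilon.
Import Order.TTheory GRing.Theory Num.Theory.
Local Open Scope ring_scope.
Set Implicit Arguments.
Unset Strict Implicit.
Unset Printing Implicit Defensive.
Section PbarLemmas.
Variables (disp : Order.disp_t) (P : finPOrderType disp).
Local Notation pb := (pbar P).

Definition ltb (a b : pb) : bool :=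
  match a, b with
  | PBot, PBot => false
  | PBot, _ => true
  | PElt x, PElt y => (x < y)%O
  | PElt _, PTop => true
  | _, _ => false
  end.

Lemma ltbP a b : reflect (pbar_lt a b) (ltb a b).
Proof. by case: a => [|x|]; case: b => [|y|] /=; apply: (iffP idP). Qed.

Lemma pbar_lt_trans (a b c : pb) : pbar_lt a b -> pbar_lt b c -> pbar_lt a c.
Proof.
case: a => [|x|]; case: b => [|y|]; case: c => [|z|] //=; exact: lt_trans.
Qed.

Lemma pbar_lt_irr (a : pb) : ~ pbar_lt a a.
Proof. by case: a => [|x|] //=; rewrite ltxx. Qed.

Lemma pbar_lt_top (a : pb) : a <> PTop -> pbar_lt a PTop.
Proof. by case: a. Qed.

Definition mu (a : pb) : nat :=
  match a with
  | PBot => #|P|.+1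
  | PElt x => #|[set y | (x < y)%O]|.+1
  | PTop => 0
  end.

Lemma above_proper (x y : P) : (x < y)%O ->
  [set z | (y < z)%O] \proper [set z | (x < z)%O].
Proof.
move=> xy; apply/properP; split.
  by apply/subsetP => z; rewrite !inE => /(lt_trans xy).
by exists y; rewrite !inE ?ltxx.
Qed.

Lemma mu_lt (a b : pb) : pbar_lt a b -> (mu b < mu a)%N.
Proof.
case: a => [|x|]; case: b => [|y|] //=.
- move=> _; rewrite ltnS; apply: (@leq_trans (#|[set: P] :\ y|).+1).
    rewrite ltnS; apply: subset_leq_card; apply/subsetP => z; rewrite !inE => yz.
    by rewrite andbT; apply/eqP => zy; move: yz; rewrite zy ltxx.
  by rewrite -cardsT [X in (_ <= X)%N](cardsD1 y) inE.
- by move=> xy; rewrite ltnS; apply: proper_card; apply: above_proper.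
Qed.

Lemma exists_cover (a b : pb) : pbar_lt a b ->
  exists c, pbar_covers a c /\ (c = b \/ pbar_lt c b).
Proof.
move=> ab.
pose S := [set y : P | ltb a (PElt y) && ltb (PElt y) b].
case: (set_0Vmem S) => [S0|[y0 y0S]].
  exists b; split; last by left.
  split => // c [h1 h2]; case: c h1 h2 => [|z|] h1 h2; first by case: (a) h1.
    have : z \in S by rewrite /S inE; apply/andP; split; apply/ltbP.
    by rewrite S0 inE.
  by case: (b) h2.
case: (arg_minnP (fun y => #|[set z | (z < y)%O]|) y0S) => y yS ymin.
exists (PElt y); have : y \in S := yS; rewrite /S inE => /andP[/ltbP ay /ltbP yb].
split; last by right.
split => // c [h1 h2]; case: c h1 h2 => [|z|] h1 h2; first by case: (a) h1.
  2: by [].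
have zS : z \in S by rewrite /S inE; apply/andP; split; apply/ltbP => //;
  apply: pbar_lt_trans yb.
have := ymin z zS; rewrite leqNgt => /negP; apply.
apply: proper_card; apply/properP; split.
  by apply/subsetP => w; rewrite !inE => /lt_trans; apply.
by exists z; rewrite !inE ?ltxx.
Qed.

Lemma covers_ind (Q : pb -> pb -> Prop) :
  (forall a b, pbar_covers a b -> Q a b) ->
  (forall a b c, Q a b -> Q b c -> Q a c) ->
  forall a b, pbar_lt a b -> Q a b.
Proof.
move=> Hc Ht.
suff H : forall n a, (mu a <= n)%N -> forall b, pbar_lt a b -> Q a b.
  by move=> a; apply: (H (mu a)).
elim=> [|n IH] a ha b ab.
  by move: (mu_lt ab); rewrite ltnNge (leq_trans ha) ?leq0n.
case: (exists_cover ab) => c [ac [<-|cb]]; first exact: Hc.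
apply: (Ht _ c); first exact: Hc.
apply: IH => //; have h := mu_lt ac.1.
by rewrite -ltnS (leq_trans h ha).
Qed.

Lemma covers_lt (a b : pb) : pbar_covers a b -> pbar_lt a b.
Proof. by case. Qed.

End PbarLemmas.
Lemma nat_max (Pn : nat -> Prop) (B : nat) :
  Pn 0%N -> (forall n, Pn n -> (n <= B)%N) ->
  exists n, Pn n /\ forall m, Pn m -> (m <= n)%N.
Proof.
move=> P0 HB; apply: NNPP => H.
have: forall i, exists n, Pn n /\ (i <= n)%N.
  elim=> [|i [n [pn le]]]; first by exists 0%N.
  have: ~ (forall m, Pn m -> (m <= n)%N) by move=> hm; apply: H; exists n.
  move/not_all_ex_not => [m hm]; case: (imply_to_and _ _ hm) => pm /negP.
  rewrite -ltnNge => nm.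
  by exists m; split => //; apply: leq_ltn_trans le nm.
move/(_ B.+1) => [n [pn le]]; have := HB n pn; by rewrite leqNgt le.
Qed.

Section SigmaPart.
Variables (R : realType) (disp : Order.disp_t) (P : finPOrderType disp).
Local Notation pb := (pbar P).

Lemma Sigma_anti (psi : pb -> R) : in_Sigma psi ->
  forall a b, pbar_lt a b -> psi b <= psi a.
Proof.
case=> _ H; apply: covers_ind => [a b /H [h _]|a b c h1 h2].
  by rewrite -subr_ge0.
exact: le_trans h2 h1.
Qed.

Lemma Sigma_ge0 (psi : pb -> R) : in_Sigma psi -> forall a, 0 <= psi a.
Proof.
move=> hs a; case: (hs) => h0 _.
case: a => [||]; last by rewrite h0.
  by rewrite -h0; apply: (Sigma_anti hs).
by move=> x; rewrite -h0; apply: (Sigma_anti hs).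
Qed.

Lemma Sigma_bound (psi : pb -> R) : in_Sigma psi -> forall a, psi a <= (mu a)%:R.
Proof.
move=> hs; case: (hs) => h0 H.
suff: forall n a, (mu a <= n)%N -> psi a <= (mu a)%:R by move=> h a; apply: (h (mu a)).
elim=> [|n IH] a ha.
  by case: a ha => [||] //= _; rewrite h0.
have [->|/pbar_lt_top hat] : a = PTop \/ a <> PTop.
  by case: (a) => [|x|]; [right|right|left].
  by rewrite h0.
case: (exists_cover hat) => c [ac _].
have hc := mu_lt ac.1.
have := IH c; rewrite -ltnS (leq_trans hc ha) => /(_ isT) h1.
case: (H _ _ ac) => _ h2.
apply: (le_trans (y := psi c + 1)); first by rewrite -lerBlDl.
apply: (le_trans (y := (mu c).+1%:R)); first by rewrite -natr1 lerD2r.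
by rewrite ler_nat.
Qed.

Definition SigN (K : pb -> nat) := in_Sigma (fun a => (K a)%:R : R).

Lemma SigN_cov (K : pb -> nat) : SigN K ->
  K PTop = 0%N /\ forall a b, pbar_covers a b -> (K b <= K a <= (K b).+1)%N.
Proof.
case=> h0 H; split; first by apply/eqP; rewrite -(eqr_nat R) h0.
move=> a b /H [h1 h2]; apply/andP; split.
  by rewrite -(ler_nat R) -subr_ge0.
by rewrite -(ler_nat R) -natr1 -lerBlDl.
Qed.

Lemma cov_SigN (K : pb -> nat) :
  K PTop = 0%N -> (forall a b, pbar_covers a b -> (K b <= K a <= (K b).+1)%N) ->
  SigN K.
Proof.
move=> h0 H; split; first by rewrite h0.
move=> a b /H /andP[h1 h2]; split.
  by rewrite subr_ge0 ler_nat.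
by rewrite lerBlDl natr1 ler_nat.
Qed.

Lemma Sigma_ceil (psi : pb -> R) : in_Sigma psi ->
  exists K, SigN K /\ psi PBot <= (K PBot)%:R.
Proof.
move=> hs; case: (hs) => h0 H.
pose K a := `|Num.ceil (psi a)|%N.
have KE a : (K a)%:R = (Num.ceil (psi a))%:~R :> R.
  rewrite /K natr_absz ger0_norm // ceil_ge0.
  by apply: lt_le_trans (Sigma_ge0 hs a); rewrite ltrN10.
exists K; split; last by rewrite KE ceil_ge.
split; first by rewrite KE h0 ceil0.
move=> a b /H [h1 h2]; rewrite !KE -intrB ler0z lerz1.
have c1 : Num.ceil (psi b) <= Num.ceil (psi a).
  by apply: le_ceil_tmp; rewrite -subr_ge0.
have c2 : Num.ceil (psi a) <= Num.ceil (psi b) + 1.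
  rewrite -(ceil1 R) -ceilDrz; last exact: rpred1.
  by apply: le_ceil_tmp; rewrite -lerBlDl.
split; lia.
Qed.

Lemma Sigma_max : exists K0, SigN K0 /\
  forall psi : pb -> R, in_Sigma psi -> psi PBot <= (K0 PBot)%:R.
Proof.
pose Pn n := exists K, SigN K /\ K PBot = n.
have P0 : Pn 0%N.
  by exists (fun _ => 0%N); split => //; apply: cov_SigN.
have HB n : Pn n -> (n <= #|P|.+1)%N.
  move=> [K [hK <-]]; have := Sigma_bound hK PBot; by rewrite ler_nat.
case: (nat_max P0 HB) => n0 [[K0 [hK0 e0]] hmax].
exists K0; split => // psi hs.
case: (Sigma_ceil hs) => K [hK le]; apply: (le_trans le).
by rewrite ler_nat e0; apply: hmax; exists K.
Qed.

End SigmaPart.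
Section RingBasics.
Variables (k : fieldType) (disp : Order.disp_t) (P : finPOrderType disp).
Local Notation pb := (pbar P).
Local Notation mnm := ('X_{1..nvars P}).
Local Notation pR := (polyR k P).
Local Notation vT := (varT P).

Definition psiM (m : mnm) (a : pb) : int :=
  match a with PBot => (m vT)%:Z | PElt x => (m (varX x))%:Z | PTop => 0 end.

Definition Mi (f : pb -> int) : Prop :=
  f PTop = 0 /\ forall a b, pbar_covers a b -> f b <= f a.
Definition Mset (m : mnm) := Mi (psiM m).

Lemma Mi_ext f g : (forall a, f a = g a) -> Mi f -> Mi g.
Proof.
move=> e [h0 H]; split; first by rewrite -e.
by move=> a b ab; rewrite -!e; apply: H.
Qed.

Lemma Mi_anti f : Mi f -> forall a b, pbar_lt a b -> f b <= f a.
Proof.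
case=> _ H; apply: covers_ind => [a b /H //|a b c h1 h2].
exact: le_trans h2 h1.
Qed.

Lemma Mi_ge0 f : Mi f -> forall a, 0 <= f a.
Proof.
move=> hf a; case: (hf) => h0 _.
case: a => [|x|]; last by rewrite h0.
  by rewrite -h0; apply: (Mi_anti hf).
by rewrite -h0; apply: (Mi_anti hf).
Qed.

Lemma varX_neqT (x : P) : varX x != vT.
Proof. by rewrite eq_sym; apply: neq_lift. Qed.

Lemma varX_inj : injective (@varX _ P).
Proof. by move=> x y /lift_inj /enum_rank_inj. Qed.

Lemma ordP (i : 'I_(nvars P)) : i = vT \/ exists x, i = varX x.
Proof.
case: (unliftP ord0 i) => [j ->|->]; last by left.
by right; exists (enum_val j); rewrite /varX enum_valK.
Qed.

Lemma mnm_eqP (m1 m2 : mnm) : (forall a, psiM m1 a = psiM m2 a) -> m1 = m2.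
Proof.
move=> h; apply/mnmP => i; case: (ordP i) => [->|[x ->]].
  by have := h PBot => /= -[].
by have := h (PElt x) => /= -[].
Qed.

Lemma psiMD m1 m2 a : psiM (m1 + m2)%MM a = psiM m1 a + psiM m2 a.
Proof. by case: a => [|x|] //=; rewrite mnmDE PoszD. Qed.

Lemma psiMMn m c a : psiM (m *+ c)%MM a = psiM m a * c%:Z.
Proof. by case: a => [|x|] //=; rewrite mulmnE PoszM. Qed.

Lemma psiM0 a : psiM 0%MM a = 0.
Proof. by case: a => [|x|] //=; rewrite mnm0E. Qed.

Lemma psiMB m1 m2 a : (m2 <= m1)%MM -> psiM (m1 - m2)%MM a = psiM m1 a - psiM m2 a.
Proof.
move/mnm_lepP => h; case: a => [|x|] //=; rewrite mnmBE ?subr0 //.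
  by rewrite subzn.
by rewrite subzn.
Qed.

Lemma psiM_le (m1 m2 : mnm) : (forall a, psiM m1 a <= psiM m2 a) -> (m1 <= m2)%MM.
Proof.
move=> h; apply/mnm_lepP => i; case: (ordP i) => [->|[x ->]].
  by have := h PBot; rewrite /= lez_nat.
by have := h (PElt x); rewrite /= lez_nat.
Qed.

Lemma Mset0 : Mset 0%MM.
Proof. by split => [|a b _]; rewrite ?psiM0. Qed.

Lemma MsetD m1 m2 : Mset m1 -> Mset m2 -> Mset (m1 + m2)%MM.
Proof.
move=> [h1 H1] [h2 H2]; split; first by rewrite psiMD h1 h2.
by move=> a b ab; rewrite !psiMD lerD // ?H1 ?H2.
Qed.

Lemma MsetMn m c : Mset m -> Mset (m *+ c)%MM.
Proof.
move=> [h1 H1]; split; first by rewrite psiMMn h1 mul0r.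
by move=> a b ab; rewrite !psiMMn ler_wpM2r // H1.
Qed.

Definition mkM (f : pb -> int) : mnm :=
  [multinom (match unlift ord0 i with
             | None => `|f PBot|%N
             | Some j => `|f (PElt (enum_val j))|%N end) | i < nvars P].

Lemma psiM_mkM (f : pb -> int) : f PTop = 0 -> (forall a, 0 <= f a) ->
  forall a, psiM (mkM f) a = f a.
Proof.
move=> h0 h a; case: a => [|x|] /=; last by rewrite h0.
  by rewrite mnmE /varT unlift_none gez0_abs.
by rewrite mnmE /varX liftK enum_rankK gez0_abs.
Qed.

Definition eI (I : {set P}) : mnm := (U_(vT) + \sum_(x in I) U_(varX x))%MM.

Lemma hibi_genE (I : {set P}) : hibi_gen k I = 'X_[eI I].
Proof. by rewrite /hibi_gen mprodXE -mpolyXD. Qed.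

Lemma psiM_eI (I : {set P}) a :
  psiM (eI I) a = match a with PBot => 1 | PElt y => (y \in I)%:Z | PTop => 0 end.
Proof.
case: a => [|y|] //=; rewrite mnmDE mnm_sumE mnm1E.
  rewrite eqxx big1 // => x _; rewrite mnm1E.
  by rewrite (negbTE (varX_neqT x)).
rewrite eq_sym (negbTE (varX_neqT y)) add0n.
rewrite (eq_bigr (fun x => (x == y) : nat)); last first.
  by move=> x _; rewrite mnm1E (inj_eq varX_inj).
case: (boolP (y \in I)) => yI.
  rewrite (bigD1 y) //= eqxx big1 ?addn0 // => x /andP[_ /negbTE ->] //.
rewrite big1 // => x xI; case: eqP => // xy.
by move: yI; rewrite -xy xI.
Qed.

Lemma Mset_eI (I : {set P}) : poset_ideal I -> Mset (eI I).
Proof.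
move=> hI; split; first by rewrite psiM_eI.
move=> a b [ab _]; rewrite !psiM_eI.
case: a b ab => [|x|] [|y|] //= xy; try by case: (_ \in _).
case: (boolP (y \in I)) => // yI.
by rewrite (hI y x (ltW xy) yI).
Qed.

End RingBasics.
Section RingMem.
Variables (k : fieldType) (disp : Order.disp_t) (P : finPOrderType disp).
Local Notation pb := (pbar P).
Local Notation mnm := ('X_{1..nvars P}).
Local Notation pR := (polyR k P).
Local Notation vT := (varT P).

Lemma Hibi0 : inHibi (0 : pR).
Proof. by have := @Hibi_const k _ P 0; rewrite mpolyC0. Qed.

Lemma Hibi1 : inHibi (1 : pR).
Proof. by have := @Hibi_const k _ P 1; rewrite mpolyC1. Qed.

Lemma hibi_supp (f : pR) : inHibi f -> forall m, m \in msupp f -> Mset m.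
Proof.
elim=> [I hI|c|f1 g _ Hf _ Hg|f1 g _ Hf _ Hg] m.
- rewrite hibi_genE msuppX mem_seq1 => /eqP ->; exact: Mset_eI.
- rewrite msuppC; case: (c == 0) => //; rewrite mem_seq1 => /eqP ->; exact: Mset0.
- move/msuppD_le; rewrite mem_cat => /orP[]; [exact: Hf|exact: Hg].
- move/msuppM_le => /allpairsP[[m1 m2] /= [h1 h2 ->]].
  by apply: MsetD; [exact: Hf|exact: Hg].
Qed.

Lemma Mset_bounds (m : mnm) : Mset m -> forall a, 0 <= psiM m a <= psiM m PBot.
Proof.
move=> hm a; rewrite (Mi_ge0 hm) /=.
case: a => [|x|]; first by [].
  by have := Mi_anti hm (a:=PBot) (b:=PElt x) Logic.I.
by rewrite hm.1.
Qed.

Lemma Mset_mpow : forall N (m : mnm), m vT = N -> Mset m -> inMpow N ('X_[m] : pR).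
Proof.
elim=> [|N IH] m hN hm.
  have -> : m = 0%MM.
    apply: mnm_eqP => a; rewrite psiM0.
    have := Mset_bounds hm a; rewrite /= hN => /andP[h1 h2].
    by apply/eqP; rewrite eq_le h1 h2.
  by rewrite mpolyX0; constructor; exact: Hibi1.
pose I := [set x : P | (m (varX x) == N.+1)%N].
have mle x : (m (varX x) <= N.+1)%N.
  by have := Mset_bounds hm (PElt x); rewrite /= hN; lia.
have hI : poset_ideal I.
  move=> x y yx; rewrite !inE => /eqP mx.
  have : (m (varX x) <= m (varX y))%N.
    move: yx; rewrite le_eqVlt => /orP[/eqP ->//|yx].
    by have := Mi_anti hm (a := PElt y) (b := PElt x) yx; rewrite /= lez_nat.
  by rewrite mx eqn_leq mle => ->.
have inI x : (x \in I) = (m (varX x) == N.+1)%N by rewrite inE.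
have le : (eI I <= m)%MM.
  apply: psiM_le => a; rewrite psiM_eI; case: a => [|y|] //=.
    by rewrite hN.
  by rewrite inI; case: eqP => [->|].
pose m' := (m - eI I)%MM.
have em : m = (m' + eI I)%MM by rewrite submK.
have pm' a : psiM m' a = psiM m a - psiM (eI I) a by rewrite psiMB.
rewrite em mpolyXD; apply: MpowS; last first.
  by rewrite -hibi_genE; have := M_gen Hibi1 hI; rewrite mul1r.
apply: IH.
  by have := pm' PBot; rewrite psiM_eI /= hN => -[]; lia.
split; first by rewrite pm' psiM_eI hm.1.
move=> a b ab; rewrite !pm' !psiM_eI.
case: a b ab => [|x|] [|y|] [abl _] //=; rewrite ?inI ?hN.
- by move: (mle y); case: eqP; lia.
- lia.
- have := Mi_anti hm (a := PElt x) (b := PElt y) abl; rewrite /= lez_nat => hxy.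
  move: (mle x) (mle y) hxy; case: eqP; case: eqP; lia.
- by move: (mle x); case: eqP; lia.
Qed.

Lemma Mset_hibi (m : mnm) : Mset m -> inHibi ('X_[m] : pR).
Proof.
move=> hm; have := Mset_mpow (erefl _) hm.
suff H : forall N (f : pR), inMpow N f -> inHibi f by apply: H.
move=> N f; elim=> // [n0 a b _ ha hb|n0 f1 g _ h1 _ h2].
- apply: Hibi_mul => //; elim: hb => [r I hr hI|f2 g2 _ h3 _ h4].
    by apply: Hibi_mul => //; apply: Hibi_gen.
  exact: Hibi_add.
- exact: Hibi_add.
Qed.

Lemma inM_hibi (f : pR) : inM f -> inHibi f.
Proof.
elim=> [r I hr hI|f2 g2 _ h3 _ h4]; last exact: Hibi_add.
by apply: Hibi_mul => //; apply: Hibi_gen.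
Qed.

Lemma inMpow_hibi N (f : pR) : inMpow N f -> inHibi f.
Proof.
elim=> // [n0 a b _ ha hb|n0 f1 g _ h1 _ h2].
- by apply: Hibi_mul => //; apply: inM_hibi.
- exact: Hibi_add.
Qed.

Lemma supp_hibi (f : pR) : (forall m, m \in msupp f -> Mset m) -> inHibi f.
Proof.
move=> h; rewrite {1}(mpolyE f) big_seq; apply: big_ind.
- exact: Hibi0.
- exact: Hibi_add.
- move=> m hm; rewrite -mul_mpolyC; apply: Hibi_mul; first exact: Hibi_const.
  by apply: Mset_hibi; apply: h.
Qed.

Lemma inMpow_mulr N (a r : pR) : inMpow N a -> inHibi r -> inMpow N (a * r).
Proof.
move=> ha hr; elim: ha => [f hf|n0 a0 b _ IH hb|n0 f g _ IH1 _ IH2].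
- by constructor; apply: Hibi_mul.
- by rewrite -mulrA [b * r]mulrC mulrA; apply: MpowS.
- by rewrite mulrDl; apply: Mpow_add.
Qed.

Lemma inMpow_mul A B (x y : pR) : inMpow A x -> inMpow B y -> inMpow (A + B) (x * y).
Proof.
move=> hx hy; elim: hy => [f hf|n0 a0 b _ IH hb|n0 f g _ IH1 _ IH2].
- by rewrite addn0; apply: inMpow_mulr.
- by rewrite addnS mulrA; apply: MpowS.
- by rewrite mulrDr; apply: Mpow_add.
Qed.

Lemma inMpow_exp A c (x : pR) : inMpow A x -> inMpow (A * c) (x ^+ c).
Proof.
move=> hx; elim: c => [|c IH]; first by rewrite muln0 expr0; constructor; exact: Hibi1.
by rewrite mulnS exprS; apply: inMpow_mul.
Qed.

Lemma inMpow_pred N (f : pR) : inMpow N.+1 f -> inMpow N f.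
Proof.
move E : N.+1 => M h; elim: h N E => //.
- move=> n0 a b ha _ hb N [->]; apply: inMpow_mulr => //; exact: inM_hibi.
- move=> n0 f1 g _ IH1 _ IH2 N E; apply: Mpow_add; [exact: IH1|exact: IH2].
Qed.

Lemma inMpow_le N M (f : pR) : (M <= N)%N -> inMpow N f -> inMpow M f.
Proof.
move=> le; rewrite -(subnK le); elim: (N - M)%N => // d IH h.
by apply: IH; apply: inMpow_pred; rewrite -addSn.
Qed.

Lemma inM_deg (f : pR) : inM f -> forall m, m \in msupp f -> (1 <= m vT)%N.
Proof.
elim=> [r I hr hI|f2 g2 _ h3 _ h4] m.
- rewrite hibi_genE => /msuppM_le /allpairsP[[m1 m2] /= [_]].
  rewrite msuppX mem_seq1 => /eqP -> ->.
  by have := psiM_eI I PBot; rewrite /= mnmDE => -[->]; rewrite addn1.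
- by move/msuppD_le; rewrite mem_cat => /orP[]; [exact: h3|exact: h4].
Qed.

Lemma inMpow_deg N (f : pR) : inMpow N f -> forall m, m \in msupp f -> (N <= m vT)%N.
Proof.
elim=> // [n0 a b _ ha hb|n0 f1 g _ h1 _ h2] m.
- move/msuppM_le => /allpairsP[[m1 m2] /= [hm1 hm2 ->]].
  by rewrite mnmDE -addn1 leq_add // ?ha // (inM_deg hb).
- by move/msuppD_le; rewrite mem_cat => /orP[]; [exact: h1|exact: h2].
Qed.

End RingMem.
Section Roots.
Variables (k : fieldType) (p : nat).
Hypotheses (pchar_p : p \in [pchar k]) (perf : perfect_field k p).

Lemma p_prime : prime p. Proof. exact: pcharf_prime pchar_p. Qed.
Lemma p_gt0 : (0 < p)%N. Proof. exact: prime_gt0 p_prime. Qed.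

Lemma pnat_pow (R : comNzRingType) e : p \in [pchar R] -> [pchar R].-nat (p ^ e)%N.
Proof.
move=> hp; rewrite (eq_pnat _ (pcharf_eq hp)) pnatX pnat_id //.
exact: pcharf_prime hp.
Qed.

Lemma frob_add (R : comNzRingType) e (x y : R) : p \in [pchar R] ->
  (x + y) ^+ (p ^ e)%N = x ^+ (p ^ e)%N + y ^+ (p ^ e)%N.
Proof. by move=> hp; apply: exprDn_pchar; apply: pnat_pow. Qed.

Lemma frob_sum (R : comNzRingType) e (I : Type) (r : seq I) (F : I -> R) :
  p \in [pchar R] ->
  (\sum_(i <- r) F i) ^+ (p ^ e)%N = \sum_(i <- r) (F i) ^+ (p ^ e)%N.
Proof.
move=> hp; elim: r => [|i r IH]; first by rewrite !big_nil expr0n expn_eq0 /=;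
  case: p p_gt0.
by rewrite !big_cons frob_add // IH.
Qed.

Lemma ex_rootp (x : k) : exists y, y ^+ p == x.
Proof. by case: (perf x) => y hy; exists y; apply/eqP. Qed.

Definition rootp (x : k) : k := xchoose (ex_rootp x).

Lemma rootpK x : rootp x ^+ p = x.
Proof. exact/eqP/(xchooseP (ex_rootp x)). Qed.

Lemma frobp_inj (y z : k) : y ^+ p = z ^+ p -> y = z.
Proof.
move=> h; apply/eqP; rewrite -subr_eq0.
have : (y - z) ^+ p == 0.
  have := pFrobenius_autB_comm pchar_p (mulrC y z).
  by rewrite !pFrobenius_autE h subrr => ->.
by rewrite expf_eq0 p_gt0.
Qed.

Lemma rootpX x : rootp (x ^+ p) = x.
Proof. by apply: frobp_inj; rewrite rootpK. Qed.

Lemma rootpD x y : rootp (x + y) = rootp x + rootp y.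
Proof.
apply: frobp_inj; rewrite rootpK.
have := frob_add 1 (rootp x) (rootp y) pchar_p; rewrite expn1 => ->.
by rewrite !rootpK.
Qed.

Lemma rootpM x y : rootp (x * y) = rootp x * rootp y.
Proof. by apply: frobp_inj; rewrite rootpK exprMn !rootpK. Qed.

Definition rootq e (x : k) : k := iter e rootp x.

Lemma rootqK e x : rootq e x ^+ (p ^ e)%N = x.
Proof.
elim: e x => [|e IH] x; first by rewrite expr1.
by rewrite /rootq iterS expnS exprM rootpK IH.
Qed.

Lemma rootqX e x : rootq e (x ^+ (p ^ e)%N) = x.
Proof.
elim: e x => [|e IH] x; first by rewrite expr1.
by rewrite /rootq iterS expnS exprM -/(rootq e _) IH rootpX.
Qed.

Lemma rootqD e x y : rootq e (x + y) = rootq e x + rootq e y.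
Proof. by elim: e => //= e IH; rewrite IH rootpD. Qed.

Lemma rootqM e x y : rootq e (x * y) = rootq e x * rootq e y.
Proof. by elim: e => //= e IH; rewrite IH rootpM. Qed.

Lemma rootq0 e : rootq e 0 = 0.
Proof. by have := rootqX e 0; rewrite expr0n expn_eq0 /=; case: p p_gt0. Qed.

Lemma rootq1 e : rootq e 1 = 1.
Proof. by have := rootqX e 1; rewrite expr1n. Qed.

End Roots.
Lemma coefXM (k : fieldType) n (a b : 'X_{1..n}) (g : {mpoly k[n]}) :
  ('X_[a] * g)@_b = if (a <= b)%MM then g@_(b - a)%MM else 0.
Proof.
rewrite mulrC; case: ifP => hab.
  by rewrite -{1}(submK hab) addmC mcoeffMX.
apply/eqP; rewrite mcoeff_eq0; apply/negP.
rewrite (perm_mem (msuppMX g a)) => /mapP[m' _ hb].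
by rewrite hb lem_addr in hab.
Qed.

Lemma int_aux (Q x y : int) : 0 <= Q -> (Q + 1) * x <= Q * y -> y <= 1 -> x <= 0.
Proof. move=> h1 h2 h3; nia. Qed.

Section Lower.
Variables (k : fieldType) (disp : Order.disp_t) (P : finPOrderType disp) (p : nat).
Hypotheses (pchar_p : p \in [pchar k]) (perf : perfect_field k p).
Variable (K0 : pbar P -> nat).
Hypothesis hK0 : K0 PTop = 0%N /\
  forall a b, pbar_covers a b -> (K0 b <= K0 a <= (K0 b).+1)%N.
Variable e : nat.
Local Notation pb := (pbar P).
Local Notation mnm := ('X_{1..nvars P}).
Local Notation pR := (polyR k P).
Local Notation vT := (varT P).
Local Notation q := (p ^ e)%N.
Local Notation Q := (p ^ e).-1.
Local Notation rq := (rootq perf e).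

Lemma q_gt0 : (0 < q)%N. Proof. by rewrite expn_gt0 (p_gt0 pchar_p). Qed.

Definition w0 : mnm := mkM (fun a => (K0 a)%:Z).

Lemma psiM_w0 a : psiM w0 a = (K0 a)%:Z.
Proof. by apply: psiM_mkM => [|b]; rewrite ?hK0.1. Qed.

Lemma Mset_w0 : Mset w0.
Proof.
split; first by rewrite psiM_w0 hK0.1.
move=> a b ab; rewrite !psiM_w0 lez_nat.
by case/andP: (hK0.2 _ _ ab).
Qed.

Definition uu : mnm := (w0 *+ Q)%MM.
Definition dec (v : mnm) : mnm := (uu + v *+ q)%MM.
Definition divq (m : mnm) : mnm := [multinom ((m i - uu i) %/ q)%N | i < nvars P].

Lemma divq_dec v : divq (dec v) = v.
Proof.
apply/mnmP => i; rewrite mnmE mnmDE mulmnE addKn mulnK //; exact: q_gt0.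
Qed.

Definition phi (f : pR) : pR :=
  \sum_(m <- msupp f | dec (divq m) == m) rq (f@_m) *: 'X_[divq m].

Lemma phi_coef f v : (phi f)@_v = rq (f@_(dec v)).
Proof.
rewrite /phi raddf_sum /= big_mkcond /=.
rewrite (eq_bigr (fun m => if m == dec v then rq (f@_m) else 0)); last first.
  move=> m _; rewrite mcoeffZ mcoeffX.
  have [->|ne] := eqVneq m (dec v); first by rewrite divq_dec !eqxx mulr1.
  have [hm|hm] := eqVneq (dec (divq m)) m; last by [].
  have [hv|hv] := eqVneq (divq m) v; last by rewrite mulr0.
  by move: ne; rewrite -hm hv eqxx.
rewrite -big_mkcond /=.
case: (boolP (dec v \in msupp f)) => hin.
  by rewrite -big_filter filter_pred1_uniq ?msupp_uniq // big_seq1.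
rewrite big1_seq; last first.
  by move=> m /andP[/eqP -> h]; rewrite h in hin.
by rewrite memN_msupp_eq0 // rootq0.
Qed.

Lemma phiD f g : phi (f + g) = phi f + phi g.
Proof. by apply/mpolyP => v; rewrite mcoeffD !phi_coef mcoeffD (rootqD pchar_p). Qed.

Lemma phi0 : phi 0 = 0.
Proof. by apply/mpolyP => v; rewrite phi_coef !mcoeff0 rootq0. Qed.

Lemma phiZ c g : phi (c ^+ q *: g) = c *: phi g.
Proof. by apply/mpolyP => v; rewrite mcoeffZ !phi_coef mcoeffZ (rootqM pchar_p) (rootqX pchar_p). Qed.

Lemma dec_eq0 v : (dec v == uu) = (v == 0%MM).
Proof.
apply/eqP/eqP => [/mnmP h|->].
  apply/mnmP => i; have := h i; rewrite mnmDE mulmnE mnm0E => hi.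
  have := q_gt0; nia.
by apply/mnmP => i; rewrite mnmDE mulmnE mnm0E mul0n addn0.
Qed.

Lemma phi_d : phi 'X_[uu] = 1.
Proof.
apply/mpolyP => v; rewrite phi_coef mcoeffX mcoeff1 eq_sym dec_eq0.
by case: (v == 0%MM); rewrite ?rootq1 ?rootq0.
Qed.

Lemma psiM_uu a : psiM uu a = (K0 a)%:Z * Q%:Z.
Proof. by rewrite psiMMn psiM_w0. Qed.

Lemma Lstar (g : pb -> int) : g PTop = 0 ->
  Mi (fun a => psiM uu a + q%:Z * g a) -> Mi g.
Proof.
move=> h0 [_ H]; split => // a b ab.
have := H a b ab; rewrite !psiM_uu => h.
case/andP: (hK0.2 a b ab) => h1 h2.
have hq : q%:Z = Q%:Z + 1.
  by rewrite -PoszD addn1 prednK // q_gt0.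
rewrite -subr_le0; apply: (@int_aux Q%:Z _ ((K0 a)%:Z - (K0 b)%:Z)) => //.
  rewrite -hq; move: h; rewrite hq; nia.
lia.
Qed.

Lemma Mset_dec v : Mset (dec v) -> Mset v.
Proof.
move=> h; apply: Lstar => //.
apply: (Mi_ext _ h) => a.
by rewrite /dec psiMD psiMMn mulrC.
Qed.
Lemma phi_hibi s : inHibi s -> inHibi (phi s).
Proof.
move=> hs; apply: supp_hibi => m; rewrite mcoeff_msupp phi_coef => hm.
apply: Mset_dec; apply: (hibi_supp hs); rewrite mcoeff_msupp.
by apply/eqP => h0; move: hm; rewrite h0 rootq0 ?eqxx.
Qed.

Lemma phi_XM (m : mnm) s : inHibi s -> phi ('X_[m *+ q] * s) = 'X_[m] * phi s.
Proof.
move=> hs; apply/mpolyP => v; rewrite phi_coef !coefXM.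
have [hmv|hmv] := boolP (m <= v)%MM.
  have h1 : (m *+ q <= dec v)%MM.
    apply/mnm_lepP => i; rewrite mnmDE !mulmnE; move/mnm_lepP: hmv => /(_ i) h.
    nia.
  rewrite h1 phi_coef; congr (rq (s@_ _)).
  apply/mnmP => i; rewrite mnmBE !mnmDE !mulmnE mnmBE; move/mnm_lepP: hmv => /(_ i) h.
  rewrite mulnBl -addnBA //; exact: leq_mul.
case: ifP => h1; last by rewrite rootq0.
rewrite memN_msupp_eq0 ?rootq0 //; apply/negP => hin.
have hb := hibi_supp hs hin.
have : Mi (fun a => psiM v a - psiM m a).
  apply: Lstar; first by rewrite /= subrr.
  apply: (Mi_ext _ hb) => a; rewrite psiMB // psiMD !psiMMn; ring.
move/Mi_ge0 => hge; move/negP: hmv; apply; apply: psiM_le => a.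
by have := hge a; rewrite subr_ge0.
Qed.

Lemma pchar_pR : p \in [pchar pR].
Proof. by rewrite (pchar_lalg pR). Qed.

Lemma phi_sum (I : Type) (r : seq I) (F : I -> pR) :
  phi (\sum_(i <- r) F i) = \sum_(i <- r) phi (F i).
Proof. exact: (big_morph phi phiD phi0). Qed.

Lemma phi_frob r s : inHibi s -> phi (r ^+ q * s) = r * phi s.
Proof.
move=> hs.
rewrite [in RHS](mpolyE r) [r in LHS](mpolyE r) (frob_sum pchar_p) ?pchar_pR //.
rewrite mulr_suml phi_sum mulr_suml; apply: eq_bigr => m _.
by rewrite exprZn mpolyXn -scalerAl phiZ phi_XM // scalerAl.
Qed.

Lemma lower_splits : frob_splits q ('X_[uu] : pR).
Proof.
exists phi; split.
- exact: phi_hibi.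
- by move=> *; exact: phiD.
- by move=> r s _ hs; apply: phi_frob.
- exact: phi_d.
Qed.

Lemma lower_mpow : inMpow (K0 PBot * Q) ('X_[uu] : pR).
Proof.
rewrite /uu -mpolyXn; apply: inMpow_exp; apply: Mset_mpow; last exact: Mset_w0.
by have := psiM_w0 PBot => /= -[].
Qed.

End Lower.
Lemma natz_intr (R : pzRingType) (n : nat) : (n%:Z)%:~R = n%:R :> R.
Proof. by []. Qed.

Section Upper.
Variables (R : realType) (k : fieldType) (disp : Order.disp_t)
  (P : finPOrderType disp) (p : nat).
Hypotheses (pchar_p : p \in [pchar k]) (perf : perfect_field k p).
Variable K0 : pbar P -> nat.
Hypothesis hmax : forall psi : pbar P -> R, in_Sigma psi -> psi PBot <= (K0 PBot)%:R.
Variable e : nat.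
Hypothesis he : (0 < e)%N.
Local Notation pb := (pbar P).
Local Notation mnm := ('X_{1..nvars P}).
Local Notation pR := (polyR k P).
Local Notation vT := (varT P).
Local Notation q := (p ^ e)%N.
Local Notation Q := (p ^ e).-1.

Lemma Q_gt0 : (0 < Q)%N.
Proof.
have p1 := prime_gt1 (p_prime pchar_p).
have : (p ^ 1 <= q)%N by apply: leq_pexp2l => //; apply: ltnW.
rewrite expn1 => hq; rewrite -subn1 subn_gt0; exact: leq_trans p1 hq.
Qed.

Lemma qQ : q%:Z = Q%:Z + 1.
Proof. by rewrite -PoszD addn1 prednK // (q_gt0 pchar_p). Qed.

Lemma big_cover (h : mnm) : Mset h -> (K0 PBot * Q < h vT)%N ->
  exists z1 z2, pbar_covers z1 z2 /\ q%:Z <= psiM h z1 - psiM h z2.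
Proof.
move=> hm hlt; apply: NNPP => H.
have hc : forall a b, pbar_covers a b -> psiM h a - psiM h b <= Q%:Z.
  move=> a b ab; case: (lerP (q%:Z) (psiM h a - psiM h b)) => hq.
    by case: H; exists a, b.
  by move: hq; rewrite qQ; lia.
have Qp : (0 : R) < Q%:R by rewrite ltr0n Q_gt0.
pose psi (a : pb) : R := (psiM h a)%:~R / Q%:R.
have hs : in_Sigma psi.
  split; first by rewrite /psi hm.1 mul0r.
  move=> a b ab; rewrite /psi -mulrBl -intrB; split.
    by apply: divr_ge0; rewrite ?ler0n // ler0z subr_ge0; apply: hm.2.
  by rewrite ler_pdivrMr // mul1r -natz_intr ler_int; apply: hc.
have := hmax hs; rewrite /psi /= ler_pdivrMr // natz_intr -natrM ler_nat.
by rewrite leqNgt hlt.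
Qed.

Section Good.
Variables (h : mnm) (z2 : pb).
Inductive good : pb -> Prop :=
| good_base : good z2
| good_step a b : pbar_covers a b -> good b -> psiM h a - psiM h b <= Q%:Z -> good a.

Lemma good_le a : good a -> a = z2 \/ pbar_lt a z2.
Proof.
elim=> [|a0 b ab _ IH _]; first by left.
right; case: IH => [<-|bz]; first exact: ab.1.
exact: pbar_lt_trans ab.1 bz.
Qed.

Lemma not_good_z1 z1 : pbar_covers z1 z2 -> q%:Z <= psiM h z1 - psiM h z2 ->
  ~ good z1.
Proof.
move=> [l12 nb] hq g; inversion g as [e1|a b ab gb hd e1].
  by rewrite e1 in l12; apply: (pbar_lt_irr l12).
case: (good_le gb) => [eb|bz].
  by move: hd hq; rewrite eb qQ; lia.
by apply: (nb b); split => //; case: ab.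
Qed.

Definition bgood a : bool := if excluded_middle_informative (good a) then true else false.

Lemma bgoodP a : bgood a = true <-> good a.
Proof. by rewrite /bgood; case: excluded_middle_informative. Qed.
End Good.

Lemma E2 (phi : pR -> pR) :
  (forall s, inHibi s -> inHibi (phi s)) ->
  (forall r s, inHibi r -> inHibi s -> phi (r ^+ q * s) = r * phi s) ->
  forall (h : mnm) z1 z2, Mset h -> pbar_covers z1 z2 ->
  q%:Z <= psiM h z1 - psiM h z2 -> (phi 'X_[h])@_0%MM = 0.
Proof.
move=> phiH phiF h z1 z2 hm c12 hq.
pose ng (a : pb) : int := (~~ bgood h z2 a : nat)%:Z.
pose c0 := ng PTop.
have ng01 a : 0 <= ng a <= 1 by rewrite /ng; case: (bgood _ _ _).
have ngz2 : ng z2 = 0 by rewrite /ng (proj2 (bgoodP _ _ _) (good_base h z2)).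
have ngz1 : ng z1 = 1.
  rewrite /ng; case E : (bgood h z2 z1) => //.
  by move/bgoodP: E => /(not_good_z1 c12 hq).
pose rf (a : pb) : int := (mu a)%:Z.
have Mr : Mi rf.
  split => // a b [ab _]; rewrite /rf lez_nat; apply: ltnW; exact: mu_lt.
have rcov a b : pbar_covers a b -> rf b + 1 <= rf a.
  by move=> [ab _]; rewrite /rf -PoszD lez_nat addn1; exact: mu_lt.
pose m2f (a : pb) : int := rf a + ng a - c0.
have M2 : Mi m2f.
  split; first by rewrite /m2f /rf /= add0r subrr.
  move=> a b ab; rewrite /m2f; have := rcov a b ab.
  by move: (ng01 a) (ng01 b); lia.
pose hf (a : pb) : int := psiM h a + q%:Z * c0 - q%:Z * ng a.
have Mh : Mi hf.
  split; first by rewrite /hf hm.1 add0r subrr.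
  move=> a b ab; rewrite /hf.
  have hab := hm.2 a b ab.
  suff : psiM h b - q%:Z * ng b <= psiM h a - q%:Z * ng a by lia.
  rewrite /ng; case Ea : (bgood h z2 a); case Eb : (bgood h z2 b) => /=.
  - by rewrite !mulr0 !subr0.
  - by rewrite mulr0 subr0 mulr1 lerBlDr; apply: ler_wpDr.
  - rewrite mulr0 subr0 mulr1 lerBrDr addrC -lerBrDr.
    case: (lerP (psiM h a - psiM h b) Q%:Z) => hd.
      have : good h z2 a by apply: good_step ab _ hd; apply/(bgoodP h z2 b).
      by move/(bgoodP h z2 a); rewrite Ea.
    by move: hd; rewrite qQ; lia.
  - by rewrite mulr1 lerD2r.
have ge0 f : Mi f -> forall a, 0 <= f a by move=> hf0; apply: Mi_ge0.
pose m1 := mkM rf; pose m2 := mkM m2f; pose h' := mkM hf.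
have pm1 a : psiM m1 a = rf a by apply: psiM_mkM; [exact: Mr.1|exact: ge0].
have pm2 a : psiM m2 a = m2f a by apply: psiM_mkM; [exact: M2.1|exact: ge0].
have ph' a : psiM h' a = hf a by apply: psiM_mkM; [exact: Mh.1|exact: ge0].
have Mm1 : Mset m1 by apply: (Mi_ext _ Mr) => a; rewrite pm1.
have Mm2 : Mset m2 by apply: (Mi_ext _ M2) => a; rewrite pm2.
have Mh' : Mset h' by apply: (Mi_ext _ Mh) => a; rewrite ph'.
have eqm : (m1 *+ q + h = m2 *+ q + h')%MM.
  apply: mnm_eqP => a; rewrite !psiMD !psiMMn pm1 pm2 ph' /m2f /hf; ring.
have key : 'X_[m1] * phi 'X_[h] = 'X_[m2] * phi 'X_[h'].
  rewrite -(phiF _ _ (Mset_hibi k Mm1) (Mset_hibi k hm)).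
  rewrite -(phiF _ _ (Mset_hibi k Mm2) (Mset_hibi k Mh')).
  by rewrite !mpolyXn -!mpolyXD eqm.
have := congr1 (mcoeff m1) key; rewrite !coefXM lepm_refl.
have -> : (m1 - m1 = 0)%MM by apply/mnmP => i; rewrite mnmBE subnn mnm0E.
move=> ->; case: ifP => // le21.
apply: memN_msupp_eq0; apply/negP => hin.
have := hibi_supp (phiH _ (Mset_hibi k Mh')) hin => hM.
have e1 : m2f z1 = rf z1 + 1 - c0 by rewrite /m2f ngz1.
have e2 : m2f z2 = rf z2 + 0 - c0 by rewrite /m2f ngz2.
have := hM.2 z1 z2 c12; rewrite !psiMB // !pm1 !pm2 e1 e2.
lia.
Qed.
End Upper.
Lemma upper_bound (R : realType) (k : fieldType) (disp : Order.disp_t)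
  (P : finPOrderType disp) (p : nat)
  (pchar_p : p \in [pchar k]) (perf : perfect_field k p) (K0 : pbar P -> nat)
  (hmax : forall psi : pbar P -> R, in_Sigma psi -> psi PBot <= (K0 PBot)%:R)
  (t : R) : 0 <= t -> Fpure_pair k P p t -> t <= (K0 PBot)%:R.
Proof.
move=> t0 [e0 H].
pose e := maxn e0 1.
have he : (0 < e)%N by rewrite leq_max ltnS orbT.
have [d [hd [phi [h1 h2 h3 h4]]]] := H e (leq_maxl _ _).
rewrite leNgt; apply/negP => ct.
set N := `|Num.ceil (t * ((p ^ e).-1)%:R)|%N in hd.
have Qp : (0 : R) < ((p ^ e).-1)%:R by rewrite ltr0n (Q_gt0 pchar_p he).
have hN : (K0 PBot * (p ^ e).-1 < N)%N.
  have c1 : (K0 PBot)%:R * ((p ^ e).-1)%:R < t * ((p ^ e).-1)%:R :> R.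
    by rewrite ltr_pM2r.
  have c2 := ceil_ge (t * ((p ^ e).-1)%:R).
  have c3 : ((K0 PBot * (p ^ e).-1)%N%:Z)%:~R < (Num.ceil (t * ((p ^ e).-1)%:R))%:~R :> R.
    by rewrite natz_intr natrM; apply: lt_le_trans c2.
  rewrite ltr_int in c3.
  have cge : 0 <= Num.ceil (t * ((p ^ e).-1)%:R).
    rewrite ceil_ge0; apply: (lt_le_trans (y := 0)); first by rewrite ltrN10.
    by apply: mulr_ge0 => //; apply: ltW.
  by rewrite -ltz_nat /N gez0_abs.
have hdH := inMpow_hibi hd.
have phi0 : phi 0 = 0.
  have E := h2 0 0 (Hibi0 k P) (Hibi0 k P); rewrite addr0 in E.
  by apply: (addrI (phi 0)); rewrite addr0 -E.
have phisum : forall (l : seq 'X_{1..nvars P}) (F : 'X_{1..nvars P} -> polyR k P),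
    (forall m, m \in l -> inHibi (F m)) ->
    phi (\sum_(m <- l) F m) = \sum_(m <- l) phi (F m).
  elim => [|m l IH] F hF; first by rewrite !big_nil.
  rewrite !big_cons h2; first by rewrite IH // => m' hm'; apply: hF; rewrite inE hm' orbT.
    by apply: hF; rewrite inE eqxx.
  rewrite big_seq; apply: big_ind; [exact: Hibi0|exact: Hibi_add|].
  by move=> m' hm'; apply: hF; rewrite inE hm' orbT.
have term : forall m, m \in msupp d ->
    inHibi (d@_m *: 'X_[m]) /\ (phi (d@_m *: 'X_[m]))@_0%MM = 0.
  move=> m hm.
  have Mm := hibi_supp hdH hm.
  have hX := Mset_hibi k Mm.
  have eT : d@_m *: 'X_[m] = ((rootq perf e (d@_m))%:MP) ^+ (p ^ e) * 'X_[m].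
    by rewrite -rmorphXn /= rootqK mul_mpolyC.
  split; first by rewrite -mul_mpolyC; apply: Hibi_mul => //; apply: Hibi_const.
  rewrite eT h3 //; last exact: Hibi_const.
  rewrite mcoeffCM.
  have [z1 [z2 [c12 hq]]] : exists z1 z2, pbar_covers z1 z2 /\
      (p ^ e)%N%:Z <= psiM m z1 - psiM m z2.
    apply: (big_cover pchar_p hmax he Mm).
    exact: leq_trans hN (inMpow_deg hd hm).
  by rewrite (E2 pchar_p he h1 h3 Mm c12 hq) mulr0.
have := congr1 (mcoeff 0%MM) h4.
rewrite {1}(mpolyE d) phisum; last by move=> m hm; case: (term m hm).
rewrite raddf_sum /= big_seq big1; last by move=> m hm; case: (term m hm).
by rewrite mcoeff1 eqxx => /eqP; rewrite eq_sym oner_eq0.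
Qed.

Unset Implicit Arguments.
Set Strict Implicit.

Theorem theorem3p7 (R : realType) (k : fieldType) (p : nat)
  (disp : Order.disp_t) (P : finPOrderType disp) :
  prime p -> p \in [pchar k] -> perfect_field k p ->
  exists2 psi0 : pbar P -> R, in_Sigma psi0 &
    (forall psi : pbar P -> R, in_Sigma psi -> psi PBot <= psi0 PBot) /\
    is_fpt k P p (psi0 PBot).
Proof.
move=> hp hch hperf.
have [K0 [hK0 hmax]] := Sigma_max R P.
exists (fun a => (K0 a)%:R : R) => //; split => //.
have hK0' := SigN_cov hK0.
split.
  by move=> t t0 ht; apply: (upper_bound hch hperf hmax t0 ht).
move=> b hb; apply: hb; first exact: ler0n.
exists 0%N => e _; exists ('X_[uu p K0 e]); split.
  have -> : `|Num.ceil ((K0 PBot)%:R * ((p ^ e).-1)%:R : R)|%N =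
      (K0 PBot * (p ^ e).-1)%N.
    by rewrite -natrM -natz_intr intrKceil.
  exact: lower_mpow.
exact: lower_splits.
Qed.
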